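(* Let $q$ be a prime power, $\eta\ge0$ an integer, $(\delta_T,\delta_X)\in\mathbb{Z}\times\mathbb{N}$ with $\delta=\delta_T+\eta\delta_X\ge0$. Then: (1) the map $p$ (defined in the context) induces a bijection from the quotient set $\mathcal{P}(\delta_T,\delta_X)/\equiv$ onto $\mathcal{K}(\delta_T,\delta_X)$; (2) $\mathcal{K}(\delta_T,\delta_X)$ is a set of representatives of $\mathcal{P}(\delta_T,\delta_X)$ under $\equiv$; (3) $\Delta(\delta_T,\delta_X)=\{M(\alpha,\beta):(\alpha,\beta)\in\mathcal{K}(\delta_T,\delta_X)\}$ is a set of representatives of the set of monomials of bidegree $(\delta_T,\delta_X)$ under $\equiv$.
   Context: $R=\mathbb{F}_q[T_1,T_2,X_1,X_2]$; the bidegree of $T_1^{c_1}T_2^{c_2}X_1^{d_1}X_2^{d_2}$ is $(c_1+c_2-\eta d_1,d_1+d_2)$. The Hirzebruch surface $\mathcal{H}_\eta$ is the quotient of $(\mathbb{A}^2\setminus\{0\})^2$ by $\mathbb{G}_m^2$ acting by $(\lambda,\mu)\cdot(t_1,t_2,x_1,x_2)=(\lambda t_1,\lambda t_2,\mu\lambda^{-\eta}x_1,\mu x_2)$; each $\mathbb{F}_q$-point has a unique representative of the form $(1,a,1,b)$, $(0,1,1,b)$, $(1,a,0,1)$ or $(0,1,0,1)$ ($a,b\in\mathbb{F}_q$), where polynomials are evaluated. Two monomials of bidegree $(\delta_T,\delta_X)$ are equivalent ($\equiv$) if they take the same value at every $\mathbb{F}_q$-point. $\mathcal{P}(\delta_T,\delta_X)=\{(a,b)\in\mathbb{N}^2: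 a\le\delta_X,\ \eta a+b\le\delta\}$; for $(d_2,c_2)\in\mathcal{P}(\delta_T,\delta_X)$, $M(d_2,c_2)=T_1^{\delta-\eta d_2-c_2}T_2^{c_2}X_1^{\delta_X-d_2}X_2^{d_2}$ (a bijection onto the monomials of bidegree $(\delta_T,\delta_X)$), and $(d_2,c_2)\equiv(d'_2,c'_2)$ iff $M(d_2,c_2)\equiv M(d'_2,c'_2)$. $A=\delta_X$ if $\delta_T\ge0$, $A=\delta/\eta$ if $\delta_T<0$. $\mathcal{A}_X=\{\alpha\in\mathbb{N}:\alpha\le\min(\lfloor A\rfloor,q-1)\}\cup(\{A\}\cap\mathbb{N})$, $\mathcal{K}(\delta_T,\delta_X)=\{(\alpha,\beta)\in\mathbb{N}^2:\alpha\in\mathcal{A}_X,\ \beta\le\min(\delta-\eta\alpha,q)-1\text{ or }\beta=\delta-\eta\alpha\}$. The map $p:\mathcal{P}(\delta_T,\delta_X)\to\mathcal{P}(\delta_T,\delta_X)$, $(d_2,c_2)\mapsto(d'_2,c'_2)$: $d'_2=d_2$ if $d_2=0$ or $d_2=A$, otherwise $d'_2$ is the element of $\{1,\dots,q-1\}$ congruent to $d_2$ mod $q-1$; $c'_2=0$ if $c_2=0$; $c'_2=\delta-\eta d'_2$ if $c_2=\delta-\eta d_2$; otherwise $c'_2$ is the element of $\{1,\dots,q-1\}$ congruent to $c_2$ mod $q-1$. *)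

(* Defs.v *)
From HB Require Import structures.
From mathcomp Require Import all_boot all_order all_algebra.
Set Implicit Arguments. Unset Strict Implicit. Unset Printing Implicit Defensive.
Import Order.TTheory GRing.Theory Num.Theory.
Local Open Scope ring_scope.

(* A monomial T1^c1 T2^c2 X1^d1 X2^d2 is represented by its exponent
   tuple (c1, c2, d1, d2). *)
Definition monomial := (nat * nat * nat * nat)%type.

Definition bideg (eta : nat) (m : monomial) : int * nat :=
  let: (c1, c2, d1, d2) := m in
  ((c1 + c2)%:Z - (eta * d1)%:Z, (d1 + d2)%N).

(* evaluation of a monomial at (t1, t2, x1, x2) (with 0^0 = 1) *)
Definition eval_mono (F : fieldType) (m : monomial) (pt : F * F * F * F) : F :=
  let: (c1, c2, d1, d2) := m in
  let: (t1, t2, x1, x2) := pt in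
  t1 ^+ c1 * t2 ^+ c2 * x1 ^+ d1 * x2 ^+ d2.

(* The F-points of the Hirzebruch surface, through their unique
   representatives (1,a,1,b), (0,1,1,b), (1,a,0,1), (0,1,0,1). *)
Definition hpoint (F : fieldType) (pt : F * F * F * F) : Prop :=
  exists a b : F,
    pt = (1, a, 1, b) \/ pt = (0, 1, 1, b) \/ pt = (1, a, 0, 1) \/ pt = (0, 1, 0, 1).

Definition mono_equiv (F : fieldType) (m m' : monomial) : Prop :=
  forall pt : F * F * F * F, hpoint pt -> eval_mono m pt = eval_mono m' pt.

Definition hdelta (eta : nat) (dT : int) (dX : nat) : int := dT + (eta * dX)%N%:Z.

Definition Pset (eta : nat) (dT : int) (dX : nat) (x : nat * nat) : Prop :=
  (x.1 <= dX)%N /\ (eta * x.1 + x.2)%N%:Z <= hdelta eta dT dX.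

Definition Mmono (eta : nat) (dT : int) (dX : nat) (x : nat * nat) : monomial :=
  let: (d2, c2) := x in
  (absz (hdelta eta dT dX - (eta * d2 + c2)%N%:Z), c2, (dX - d2)%N, d2).

Definition P_equiv (F : fieldType) (eta : nat) (dT : int) (dX : nat)
  (x y : nat * nat) : Prop :=
  mono_equiv F (Mmono eta dT dX x) (Mmono eta dT dX y).

Definition Aval (eta : nat) (dT : int) (dX : nat) : rat :=
  if 0 <= dT then dX%:R else (hdelta eta dT dX)%:~R / eta%:R.

Definition AXset (q eta : nat) (dT : int) (dX : nat) (a : nat) : Prop :=
  (a%:Z <= Num.floor (Aval eta dT dX) /\ (a <= q - 1)%N)
  \/ (a%:R : rat) = Aval eta dT dX.

Definition Kset (q eta : nat) (dT : int) (dX : nat) (x : nat * nat) : Prop :=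
  AXset q eta dT dX x.1 /\
  (x.2%:Z <= Num.min (hdelta eta dT dX - (eta * x.1)%N%:Z) q%:Z - 1
   \/ x.2%:Z = hdelta eta dT dX - (eta * x.1)%N%:Z).

(* for n >= 1 (and q >= 2): the element of {1, ..., q-1} congruent to n mod q-1 *)
Definition redq (q n : nat) : nat := ((n.-1 %% q.-1).+1)%N.

Definition pHmap (q eta : nat) (dT : int) (dX : nat) (x : nat * nat) : nat * nat :=
  let: (d2, c2) := x in
  let d2' := if (d2 == 0)%N || ((d2%:R : rat) == Aval eta dT dX) then d2
             else redq q d2 in
  let c2' := if (c2 == 0)%N then 0%N
             else if c2%:Z == hdelta eta dT dX - (eta * d2)%N%:Z
                  then absz (hdelta eta dT dX - (eta * d2')%N%:Z)
                  else redq q c2 in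
  (d2', c2').

Definition Deltaset (q eta : nat) (dT : int) (dX : nat) (m : monomial) : Prop :=
  exists2 k, Kset q eta dT dX k & m = Mmono eta dT dX k.

(* Main.v *)
Require Import Defs.
From HB Require Import structures.
From mathcomp Require Import all_boot all_order all_algebra.
From mathcomp Require Import finfield zify.
Import Order.TTheory GRing.Theory Num.Theory.
Local Open Scope ring_scope.

Definition cls (q c : nat) : nat := if c == 0%N then 0%N else redq q c.

Lemma redq_gt0 q c : (0 < redq q c)%N. Proof. by []. Qed.
Lemma redq_le q c : (1 < q)%N -> (redq q c <= q.-1)%N.
Proof. move=> hq; rewrite /redq ltn_pmod //; lia. Qed.
Lemma redq_id q c : (0 < c)%N -> (c <= q.-1)%N -> redq q c = c.
Proof. move=> h1 h2; rewrite /redq modn_small; lia. Qed.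
Lemma redq_le_self q c : (0 < c)%N -> (redq q c <= c)%N.
Proof. move=> h; rewrite /redq; have := leq_mod c.-1 q.-1; case: c h => //. Qed.
Lemma redq_idem q c : (1 < q)%N -> redq q (redq q c) = redq q c.
Proof. move=> hq; apply: redq_id => //; exact: redq_le. Qed.
Lemma redq_shift q c k : (0 < c)%N -> redq q (c + k * q.-1) = redq q c.
Proof.
move=> h; rewrite /redq; congr (_.+1).
have -> : (c + k * q.-1).-1 = (k * q.-1 + c.-1)%N by case: c h => // c _; rewrite addSn /= addnC.
by rewrite modnMDl.
Qed.
Lemma redq_decomp q c : (0 < c)%N -> c = (redq q c + (c.-1 %/ q.-1) * q.-1)%N.
Proof. move=> h; rewrite /redq; have := divn_eq c.-1 q.-1; lia. Qed.

Lemma pow_redq (F : finFieldType) (a : F) c :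
  (0 < c)%N -> a ^+ c = a ^+ redq #|F| c.
Proof.
move=> h; rewrite {1}(redq_decomp #|F| c h).
have hq := card_finNzRing_gt1 F.
move: (redq_gt0 #|F| c); elim: (c.-1 %/ #|F|.-1)%N (redq #|F| c) => [|k IH] r hr.
  by rewrite mul0n addn0.
have -> : (r + k.+1 * #|F|.-1 = #|F| + (r.-1 + k * #|F|.-1))%N.
  rewrite mulSn; move: (k * _)%N => m; have e := prednK (ltnW hq).
  move: e; move: (#|F|.-1) => n <-.
  by case: r hr {IH} => // r _ /=; lia.
rewrite exprD expf_card -exprS.
have -> : (r.-1 + k * #|F|.-1).+1 = (r + k * #|F|.-1)%N by case: r hr {IH}.
exact: IH.
Qed.

Lemma pow_cls (F : finFieldType) (a : F) c c' :
  cls #|F| c = cls #|F| c' -> a ^+ c = a ^+ c'.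
Proof.
rewrite /cls => h.
have [c0|c0] := eqVneq c 0%N; have [c0'|c0'] := eqVneq c' 0%N.
- by rewrite c0 c0'.
- by move: h; rewrite c0 eqxx (negPf c0') => h; have := redq_gt0 #|F| c'; rewrite -h.
- by move: h; rewrite c0' eqxx (negPf c0) => h; have := redq_gt0 #|F| c; rewrite h.
move: h; rewrite (negPf c0) (negPf c0') => h.
by rewrite pow_redq ?lt0n // h -pow_redq ?lt0n.
Qed.

Lemma cls_pow (F : finFieldType) c c' :
  (forall a : F, a ^+ c = a ^+ c') -> cls #|F| c = cls #|F| c'.
Proof.
move=> H; have hq := card_finNzRing_gt1 F.
rewrite /cls.
have [c0|c0] := eqVneq c 0%N; have [c0'|c0'] := eqVneq c' 0%N => //.
- by have := H 0; rewrite c0 expr0 expr0n (negPf c0') => /eqP; rewrite oner_eq0.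
- by have := H 0; rewrite c0' expr0 expr0n (negPf c0) => /eqP; rewrite eq_sym oner_eq0.
apply/eqP/negPn/negP => hne.
set r := redq #|F| c; set r' := redq #|F| c'.
have hne' : (r == r') = false by exact: negbTE.
have Hr : forall a : F, a ^+ r = a ^+ r'.
  by move=> a; rewrite /r /r' -!pow_redq ?lt0n.
pose p : {poly F} := 'X^r - 'X^r'.
have pn0 : p != 0.
  apply/eqP => /(congr1 (fun p : {poly F} => p`_r)).
  rewrite coef0 coefB !coefXn eqxx hne' subr0 => /eqP.
  by rewrite oner_eq0.
have := @max_poly_roots _ p (enum F) pn0.
have -> : all (root p) (enum F).
  by apply/allP => a _; rewrite /root /p !hornerE Hr subrr.
rewrite enum_uniq => /(_ isT erefl).
rewrite -cardE.
have : (size p <= #|F|)%N.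
  apply: leq_trans (size_polyD _ _) _; rewrite size_polyN !size_polyXn.
  have := redq_le #|F| c hq; have := redq_le #|F| c' hq; rewrite -/r -/r'; lia.
by move=> h1; rewrite ltnNge h1.
Qed.

Lemma zpow_eq (F : fieldType) c c' :
  (0 : F) ^+ c = 0 ^+ c' -> (c == 0%N) = (c' == 0%N).
Proof.
rewrite !expr0n; case: (c == 0%N); case: (c' == 0%N) => //= /eqP;
  by rewrite ?oner_eq0 // eq_sym oner_eq0.
Qed.

Lemma zpow_eq' (F : fieldType) c c' :
  (c == 0%N) = (c' == 0%N) -> (0 : F) ^+ c = 0 ^+ c'.
Proof. by rewrite !expr0n => ->. Qed.

Lemma mono_equivP (F : finFieldType) c1 c2 d1 d2 c1' c2' d1' d2' :
  mono_equiv F (c1, c2, d1, d2) (c1', c2', d1', d2') <->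
  [/\ cls #|F| c2 = cls #|F| c2', cls #|F| d2 = cls #|F| d2',
      (c1 == 0%N) = (c1' == 0%N) & (d1 == 0%N) = (d1' == 0%N)].
Proof.
split.
- move=> H; split.
  + apply: cls_pow => a.
    have := H (1, a, 1, 1); rewrite /eval_mono !expr1n !mulr1 !mul1r; apply.
    by exists a, 1; left.
  + apply: cls_pow => b.
    have := H (1, 1, 1, b); rewrite /eval_mono !expr1n !mul1r; apply.
    by exists 1, b; left.
  + apply: (@zpow_eq F).
    have := H (0, 1, 1, 1); rewrite /eval_mono !expr1n !mulr1; apply.
    by exists 1, 1; right; left.
  + apply: (@zpow_eq F).
    have := H (1, 1, 0, 1); rewrite /eval_mono !expr1n !mulr1 !mul1r; apply.
    by exists 1, 1; right; right; left.
- case=> hc2 hd2 hc1 hd1 pt [a [b H]].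
  have Hc2 a := @pow_cls F a c2 c2' hc2.
  have Hd2 a := @pow_cls F a d2 d2' hd2.
  have Hc1 := @zpow_eq' F _ _ hc1; have Hd1 := @zpow_eq' F _ _ hd1.
  by case: H => [|[|[|]]] ->; rewrite /eval_mono ?expr1n ?Hc1 ?Hd1 ?Hc2 ?Hd2.
Qed.

Lemma Aval_eq eta dT dX D a : hdelta eta dT dX = D%:Z ->
  ((a%:R : rat) == Aval eta dT dX) =
  [&& (a <= dX)%N, (eta * a <= D)%N & (a == dX) || ((eta * a == D) && (0 < eta))%N].
Proof.
rewrite /Aval /hdelta => hD; case: ifP => hT.
- have h1 : (eta * dX <= D)%N by move: hD hT; move: (eta * dX)%N => m; lia.
  rewrite eqr_nat.
  have [->|ne] := eqVneq a dX; first by rewrite leqnn h1 ?eqxx ?orTb.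
  apply/esym/negbTE; apply/negP => /and3P [h2 h3 /andP [/eqP h4 h5]].
  nia.
- have h1 : (D < eta * dX)%N by move: hD hT; move: (eta * dX)%N => m; lia.
  have he : (0 < eta)%N by case: eta h1 {hD} => //; rewrite mul0n.
  rewrite hD.
  have -> : (D%:Z)%:~R = D%:R :> rat by [].
  rewrite -[a%:R]divr1 eqr_div ?oner_eq0 ?pnatr_eq0 -?lt0n // mulr1 -natrM eqr_nat.
  have [h2|h2] := eqVneq (a * eta)%N D.
    by rewrite he; apply/esym; apply/and3P; split; [nia|nia|apply/orP; right; apply/andP; split; [apply/eqP; nia|]].
  apply/esym/negbTE; apply/negP => /and3P [h3 h4 /orP [/eqP h5|/andP [/eqP h5 _]]]; nia.
Qed.

Lemma Aval_floor eta dT dX D a : hdelta eta dT dX = D%:Z ->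
  ((a%:Z) <= Num.floor (Aval eta dT dX)) = (a <= dX)%N && (eta * a <= D)%N.
Proof.
rewrite /Aval /hdelta => hD; case: ifP => hT.
- have h1 : (eta * dX <= D)%N by move: hD hT; move: (eta * dX)%N => m; lia.
  rewrite floor_ge_int.
  have -> : (a%:Z)%:~R = a%:R :> rat by [].
  rewrite ler_nat; case: leqP => h2 //=; apply/esym; nia.
- have h1 : (D < eta * dX)%N by move: hD hT; move: (eta * dX)%N => m; lia.
  have he : (0 < eta)%N by case: eta h1 {hD} => //; rewrite mul0n.
  rewrite hD floor_ge_int.
  have -> : (a%:Z)%:~R = a%:R :> rat by [].
  have -> : (D%:Z)%:~R = D%:R :> rat by [].
  rewrite ler_pdivlMr ?ltr0n // -natrM ler_nat.
  case: leqP => h2; apply/esym; [apply/andP; split|]; nia.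
Qed.

Local Close Scope ring_scope.

Definition isA (eta dX D a : nat) : bool :=
  [&& a <= dX, eta * a <= D & (a == dX) || ((eta * a == D) && (0 < eta))].
Definition Pn (eta dX D : nat) (x : nat * nat) : bool :=
  (x.1 <= dX) && (eta * x.1 + x.2 <= D).
Definition Kn (q eta dX D : nat) (x : nat * nat) : bool :=
  ((x.1 <= dX) && (eta * x.1 <= D) && (x.1 <= q - 1) || isA eta dX D x.1) &&
  ((eta * x.1 + x.2 < D) && (x.2 < q) || (eta * x.1 + x.2 == D)).
Definition pn (q eta dX D : nat) (x : nat * nat) : nat * nat :=
  let: (d2, c2) := x in
  let e := if (d2 == 0) || isA eta dX D d2 then d2 else redq q d2 in
  (e, if c2 == 0 then 0 else if eta * d2 + c2 == D then D - eta * e else redq q c2).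
Definition hinv (q eta dX D : nat) (x : nat * nat) :=
  (cls q x.2, cls q x.1, D - (eta * x.1 + x.2) == 0, dX - x.1 == 0).

Lemma cls0 q c : (cls q c == 0) = (c == 0).
Proof. by case: c. Qed.
Lemma clsP q c : 0 < c -> cls q c = redq q c.
Proof. by case: c. Qed.

Lemma K_P q eta dX D x : Kn q eta dX D x -> Pn eta dX D x.
Proof.
case: x => a b; rewrite /Kn /Pn /isA /=; case/andP => h1 h2.
apply/andP; split; [move: h1|move: h2]; case/orP; try case/andP; try case/andP; lia.
Qed.

Lemma p_fixK q eta dX D x : 1 < q -> Kn q eta dX D x -> pn q eta dX D x = x.
Proof.
case: x => a b hq; rewrite /Kn /pn /=; case/andP => h1 h2.
have -> : (if (a == 0) || isA eta dX D a then a else redq q a) = a.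
  case: ifP => // /norP [a0 nA]; move: h1; rewrite (negPf nA) orbF => h1.
  apply: redq_id; lia.
have [-> //|b0] := eqVneq b 0.
have [hb|hb] := eqVneq (eta * a + b) D.
  by congr pair; lia.
by rewrite redq_id //; move: h2 hb b0; case/orP => [/andP[]|]; lia.
Qed.

Lemma p_K q eta dX D x : 1 < q -> Pn eta dX D x -> Kn q eta dX D (pn q eta dX D x).
Proof.
case: x => d2 c2 hq; rewrite /Pn /pn /=; case/andP => h1 h2.
set e := (if _ then _ else _).
have he : e <= d2 /\ ((e <= dX) && (eta * e <= D) && (e <= q - 1) || isA eta dX D e).
  rewrite /e; case: ifP => [/orP [/eqP ->|hA]|/norP [d0 nA]].
  - by split => //; apply/orP; left; rewrite muln0; lia.
  - by rewrite hA orbT.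
  - have r1 := redq_le_self q d2 (ltac:(by rewrite lt0n)); have r2 := redq_le q d2 hq.
    have r3 : eta * redq q d2 <= eta * d2 by rewrite leq_mul2l r1 orbT.
    split => //; apply/orP; left; lia.
rewrite /Kn /=; apply/andP; split; first exact: he.2.
have hm : eta * e <= eta * d2 by rewrite leq_mul2l he.1 orbT.
have [c0|c0] := eqVneq c2 0; first lia.
have [hc|hc] := eqVneq (eta * d2 + c2) D; first lia.
have r1 := redq_le_self q c2 (ltac:(by rewrite lt0n)); have r2 := redq_le q c2 hq.
lia.
Qed.

Lemma inv_p q eta dX D x : 1 < q -> Pn eta dX D x ->
  hinv q eta dX D (pn q eta dX D x) = hinv q eta dX D x.
Proof.
case: x => d2 c2 hq; rewrite /Pn /pn /hinv /=; case/andP => h1 h2.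
case hA: ((d2 == 0) || isA eta dX D d2); last move/norP: hA => [d0 nA].
  have [->|c0] := eqVneq c2 0; first by [].
  have [hc|hc] := eqVneq (eta * d2 + c2) D.
    by have -> : D - eta * d2 = c2 by lia.
  have r1 := redq_le_self q c2 (ltac:(by rewrite lt0n)).
  have r2 := redq_gt0 q c2.
  rewrite !(clsP q _ (redq_gt0 q c2)) (clsP q _ (ltac:(by rewrite lt0n) : 0 < c2)).
  rewrite redq_idem //; congr (_, _, _, _); lia.
have d0' : 0 < d2 by rewrite lt0n.
have r1 := redq_le_self q d2 d0'.
have r3 : eta * redq q d2 <= eta * d2 by rewrite leq_mul2l r1 orbT.
have nA' : d2 < dX /\ (eta * d2 = D -> eta = 0).
  by move: nA; rewrite /isA h1 /=; lia.
have -> : cls q (redq q d2) = cls q d2 by rewrite !clsP // redq_idem.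
have [->|c0] := eqVneq c2 0.
  congr (_, _, _, _); lia.
have c0' : 0 < c2 by rewrite lt0n.
have [hc|hc] := eqVneq (eta * d2 + c2) D.
  have hf : D - eta * redq q d2 = c2 + (eta * (d2.-1 %/ q.-1)) * q.-1.
    have hd := redq_decomp q d2 d0'.
    have e2 : eta * d2 = eta * redq q d2 + eta * ((d2.-1 %/ q.-1) * q.-1).
      by rewrite -mulnDr -hd.
    rewrite -mulnA; move: e2 hc; move: (eta * d2) (eta * redq q d2) (eta * _) => w u v; lia.
  have e3 : cls q (D - eta * redq q d2) = cls q c2.
    by rewrite hf !clsP ?redq_shift //; lia.
  rewrite e3; congr (_, _, _, _); lia.
have r4 := redq_le_self q c2 c0'.
rewrite !(clsP q _ (redq_gt0 q c2)) (clsP q _ c0') redq_idem //; congr (_, _, _, _); lia.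
Qed.

Lemma isA_inv q eta dX D x y : Pn eta dX D x -> Pn eta dX D y ->
  hinv q eta dX D x = hinv q eta dX D y -> isA eta dX D x.1 -> x.1 = y.1.
Proof.
case: x => d2 c2; case: y => d2' c2'; rewrite /Pn /hinv /isA /=.
case/andP => h1 h2; case/andP => h1' h2'; case=> H1 H2 H3 H4.
case/and3P => _ _ /orP [/eqP hd|/andP [/eqP he ep]].
  by move: H4; rewrite hd subnn eqxx => /esym/eqP; lia.
have c0 : c2 = 0 by lia.
have c0' : c2' = 0 by apply/eqP; rewrite -(cls0 q) -H1 c0.
move: H3; rewrite c0 c0' !addn0 => H3.
have z : D - eta * d2 = 0 by lia.
have he' : eta * d2' = D by move: H3; rewrite z eqxx => /esym/eqP; lia.
by apply/eqP; rewrite -(eqn_pmul2l ep) he he'.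
Qed.

Lemma inv_p_eq q eta dX D x y : 1 < q -> Pn eta dX D x -> Pn eta dX D y ->
  hinv q eta dX D x = hinv q eta dX D y -> pn q eta dX D x = pn q eta dX D y.
Proof.
move=> hq Px Py H.
have E1 : (pn q eta dX D x).1 = (pn q eta dX D y).1.
  case hAx: (isA eta dX D x.1).
    have hxy := @isA_inv q eta dX D x y Px Py H hAx.
    by case: x y hxy hAx {Px Py H} => d2 c2 [d2' c2'] /= <- ->; rewrite orbT.
  case hAy: (isA eta dX D y.1).
    have hxy := @isA_inv q eta dX D y x Py Px (esym H) hAy.
    by case: x y hxy hAx hAy {Px Py H} => d2 c2 [d2' c2'] /= -> ->.
  case: x y H hAx hAy {Px Py} => d2 c2 [d2' c2'] /=; rewrite /hinv /=.
  case=> _ H2 _ _ -> ->; rewrite !orbF.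
  have [d0|d0] := eqVneq d2 0.
    have d0' : d2' = 0 by apply/eqP; rewrite -(cls0 q) -H2 d0.
    by rewrite d0 d0'.
  have d0' : d2' != 0 by rewrite -(cls0 q) -H2 cls0.
  by rewrite (negPf d0') -!clsP ?lt0n.
move: E1 Px Py H; case: x y => d2 c2 [d2' c2']; rewrite /pn /Pn /hinv /=.
set e := (if _ then _ else _); set e' := (if _ then _ else _).
move=> E1 /andP [h1 h2] /andP [h1' h2'] [H1 H2 H3 H4].
have [c0|c0] := eqVneq c2 0.
  have c0' : c2' = 0 by apply/eqP; rewrite -(cls0 q) -H1 c0.
  by rewrite c0' E1.
have c0' : c2' != 0 by rewrite -(cls0 q) -H1 cls0.
rewrite (negPf c0') E1; congr pair.
have [hc|hc] := eqVneq (eta * d2 + c2) D.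
  have z : D - (eta * d2 + c2) = 0 by lia.
  have hc' : eta * d2' + c2' = D by move: H3; rewrite z eqxx => /esym/eqP; lia.
  by rewrite hc' eqxx.
have hc' : eta * d2' + c2' != D.
  apply/eqP => hc'; have z : D - (eta * d2' + c2') = 0 by lia.
  by move: H3; rewrite z eqxx => /eqP; lia.
by rewrite (negPf hc') -!clsP ?lt0n.
Qed.

Local Open Scope ring_scope.

Lemma Pset_n eta dT dX D x : hdelta eta dT dX = D%:Z ->
  Pset eta dT dX x <-> Pn eta dX D x.
Proof.
move=> hD; rewrite /Pset /Pn hD lez_nat.
by split => [[-> ->]|/andP[-> ->]].
Qed.

Lemma Kset_n q eta dT dX D x : hdelta eta dT dX = D%:Z ->
  Kset q eta dT dX x <-> Kn q eta dX D x.
Proof.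
move=> hD; case: x => a b; rewrite /Kset /AXset /Kn /=.
have HA : (a%:Z <= Num.floor (Aval eta dT dX) /\ (a <= q - 1)%N \/
           (a%:R : rat) = Aval eta dT dX) <->
          ((a <= dX) && (eta * a <= D) && (a <= q - 1) || isA eta dX D a)%N.
  rewrite /isA -(@Aval_eq eta dT dX D a hD) (@Aval_floor eta dT dX D a hD).
  split => [[[h1 h2]|h]|/orP [/andP [h1 h2]|/eqP h]].
  - by rewrite h1 h2.
  - by rewrite h eqxx orbT.
  - by left.
  - by right.
have HB : (b%:Z <= Num.min (hdelta eta dT dX - (eta * a)%N%:Z) q%:Z - 1 \/
           b%:Z = hdelta eta dT dX - (eta * a)%N%:Z) <->
          ((eta * a + b < D) && (b < q) || (eta * a + b == D))%N.
  rewrite hD lerBrDr le_min; move: (eta * a)%N => m.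
  split => [[/andP [h h']|h]|/orP [/andP [h h']|/eqP h]].
  - by apply/orP; left; apply/andP; split; lia.
  - by apply/orP; right; apply/eqP; lia.
  - by left; apply/andP; split; lia.
  - by right; lia.
split => [[/HA h1 /HB h2]|/andP [/HA h1 /HB h2]]; last by split.
by rewrite h1 h2.
Qed.

Lemma pHmap_n q eta dT dX D x : hdelta eta dT dX = D%:Z -> Pn eta dX D x ->
  pHmap q eta dT dX x = pn q eta dX D x.
Proof.
move=> hD; case: x => d2 c2; rewrite /pHmap /pn /Pn /= (@Aval_eq eta dT dX D d2 hD) -/(isA eta dX D d2).
case/andP => h1 h2.
set e := (if _ then _ else _).
have he : (e <= d2)%N.
  rewrite /e; case: ifP => // /norP [d0 _]; apply: redq_le_self; by rewrite lt0n.
have hm : (eta * e <= eta * d2)%N by rewrite leq_mul2l he orbT.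
have cond : (c2%:Z == hdelta eta dT dX - (eta * d2)%N%:Z) = (eta * d2 + c2 == D)%N.
  by rewrite hD; apply/eqP/eqP; move: (eta * d2)%N => m; lia.
rewrite cond hD subzn //; lia.
Qed.

Lemma Mmono_n eta dT dX D x : hdelta eta dT dX = D%:Z -> Pn eta dX D x ->
  Mmono eta dT dX x = ((D - (eta * x.1 + x.2))%N, x.2, (dX - x.1)%N, x.1).
Proof.
move=> hD; case: x => d2 c2; rewrite /Mmono /Pn /= hD => /andP [h1 h2].
by rewrite subzn.
Qed.

Arguments Mmono_n {eta dT dX D x}.

Lemma Pequiv_n (F : finFieldType) eta dT dX D x y : hdelta eta dT dX = D%:Z ->
  Pn eta dX D x -> Pn eta dX D y ->
  P_equiv F eta dT dX x y <-> hinv #|F| eta dX D x = hinv #|F| eta dX D y.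
Proof.
move=> hD Px Py; rewrite /P_equiv (Mmono_n hD Px) (Mmono_n hD Py) mono_equivP /hinv.
by split => [[-> -> -> ->]|[-> -> -> ->]].
Qed.

Lemma bideg_M eta dT dX D x : hdelta eta dT dX = D%:Z -> Pn eta dX D x ->
  bideg eta (Mmono eta dT dX x) = (dT, dX).
Proof.
move=> hD Px; rewrite (Mmono_n hD Px); case: x Px => d2 c2; rewrite /Pn /bideg /=.
case/andP => h1 h2.
have hm : (eta * d2 <= eta * dX)%N by rewrite leq_mul2l h1 orbT.
rewrite mulnBr; congr pair; last by lia.
move: hD; rewrite /hdelta.
move: (eta * d2)%N (eta * dX)%N hm h2 => u v; lia.
Qed.

Lemma bideg_inv eta dT dX D m : hdelta eta dT dX = D%:Z ->
  bideg eta m = (dT, dX) -> exists2 x, Pn eta dX D x & m = Mmono eta dT dX x.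
Proof.
move=> hD; case: m => [[[c1 c2] d1] d2]; rewrite /bideg; case=> h1 h2.
have e1 : (eta * dX = eta * d1 + eta * d2)%N by rewrite -h2 mulnDr.
have Px : Pn eta dX D (d2, c2).
  rewrite /Pn /=; apply/andP; split; first lia.
  move: hD; rewrite /hdelta -h1 e1; move: (eta * d1)%N (eta * d2)%N => u v; lia.
exists (d2, c2) => //; rewrite (Mmono_n hD Px) /=.
congr (_, _, _, _); last by lia.
move: hD; rewrite /hdelta -h1 e1; move: (eta * d1)%N (eta * d2)%N => u v; lia.
Qed.

Arguments Pset_n {eta dT dX D} x.
Arguments Kset_n q {eta dT dX D} x.
Arguments pHmap_n {q eta dT dX D x}.
Arguments Pequiv_n {F eta dT dX D x y}.
Arguments bideg_M {eta dT dX D x}.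
Arguments bideg_inv {eta dT dX D m}.

Theorem proposition2p13 (F : finFieldType) (eta : nat) (dT : int) (dX : nat) :
  let q := #|F| in
  0 <= hdelta eta dT dX ->
  (* (1) p induces a bijection from P / == onto K *)
  ((forall x, Pset eta dT dX x -> Kset q eta dT dX (pHmap q eta dT dX x)) /\
   (forall y, Kset q eta dT dX y ->
      exists2 x, Pset eta dT dX x & pHmap q eta dT dX x = y) /\
   (forall x y, Pset eta dT dX x -> Pset eta dT dX y ->
      (P_equiv F eta dT dX x y <-> pHmap q eta dT dX x = pHmap q eta dT dX y)))
  /\
  (* (2) K is a set of representatives of P under == *)
  ((forall y, Kset q eta dT dX y -> Pset eta dT dX y) /\
   (forall x, Pset eta dT dX x ->
      exists! y, Kset q eta dT dX y /\ P_equiv F eta dT dX x y))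
  /\
  (* (3) Delta is a set of representatives of the monomials of
         bidegree (dT, dX) under == *)
  ((forall m, Deltaset q eta dT dX m -> bideg eta m = (dT, dX)) /\
   (forall m, bideg eta m = (dT, dX) ->
      exists! m', Deltaset q eta dT dX m' /\ mono_equiv F m m')).
Proof.
move=> q h0.
have [D hD] : exists D : nat, hdelta eta dT dX = D%:Z.
  by exists (absz (hdelta eta dT dX)); rewrite gez0_abs.
have hq : (1 < q)%N := card_finNzRing_gt1 F.
have PK x : Pn eta dX D x -> Kn q eta dX D (pn q eta dX D x) := @p_K q eta dX D x hq.
have KP x : Kn q eta dX D x -> Pn eta dX D x := @K_P q eta dX D x.
have fixK x : Kn q eta dX D x -> pn q eta dX D x = x := @p_fixK q eta dX D x hq.
have EQ x y : Pn eta dX D x -> Pn eta dX D y ->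
    P_equiv F eta dT dX x y <-> pn q eta dX D x = pn q eta dX D y.
  move=> Px Py; rewrite (Pequiv_n hD Px Py); split.
    exact: (@inv_p_eq q eta dX D x y hq Px Py).
  move=> e; rewrite -(@inv_p q eta dX D x hq Px) -(@inv_p q eta dX D y hq Py).
  by rewrite e.
have UR x y : Pn eta dX D x -> Kn q eta dX D y -> P_equiv F eta dT dX x y ->
    pn q eta dX D x = y.
  by move=> Px Ky /(EQ x y Px (KP y Ky)); rewrite (fixK y Ky).
have ER x : Pn eta dX D x -> P_equiv F eta dT dX x (pn q eta dX D x).
  move=> Px; apply/(EQ _ _ Px (KP _ (PK _ Px))).
  by rewrite (fixK _ (PK _ Px)).
split; [split; [|split]|split; split].
- move=> x /(Pset_n _ hD) Px; apply/(Kset_n _ _ hD).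
  by rewrite (pHmap_n (q:=q) hD Px); apply: PK.
- move=> y /(Kset_n _ _ hD) Ky; exists y; first exact/(Pset_n _ hD)/KP.
  by rewrite (pHmap_n (q:=q) hD (KP _ Ky)) fixK.
- move=> x y /(Pset_n _ hD) Px /(Pset_n _ hD) Py.
  by rewrite (pHmap_n (q:=q) hD Px) (pHmap_n (q:=q) hD Py); apply: EQ.
- by move=> y /(Kset_n _ _ hD) Ky; apply/(Pset_n _ hD)/KP.
- move=> x /(Pset_n _ hD) Px; exists (pn q eta dX D x); split.
    by split; [apply/(Kset_n _ _ hD)/PK|apply: ER].
  by move=> y [/(Kset_n _ _ hD) Ky Hxy]; apply: UR.
- move=> m [k /(Kset_n _ _ hD) Kk ->]; exact: (bideg_M hD (KP _ Kk)).
- move=> m hm; have [x Px ->] := bideg_inv hD hm.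
  exists (Mmono eta dT dX (pn q eta dX D x)); split.
    split; last exact: ER.
    by exists (pn q eta dX D x) => //; apply/(Kset_n _ _ hD)/PK.
  move=> m' [[k /(Kset_n _ _ hD) Kk ->] Hxk].
  by rewrite (UR x k Px Kk Hxk).
Qed.
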